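(* Let $A$ be a vector space with bilinear operations $\star,[-,-]$, and $x\cdot y=x\star y+y\star x$. (1) If $(A,\cdot,[-,-])$ is a transposed Poisson algebra, $(A,\star)$ is Zinbiel, and $(\mathcal{L}_{\star},\mathrm{ad},A)$ is a representation of the transposed Poisson algebra $(A,\cdot,[-,-])$, then $(A,\star,[-,-])$ is a TZLO algebra, i.e. $x\star[y,z]=[x,y]\star z=[x,y\star z]=0$ for all $x,y,z\in A$. (2) Conversely, if $(A,\star,[-,-])$ is a TZLO algebra, then $(A,\cdot,[-,-])$ is a transposed Poisson algebra with representation $(\mathcal{L}_{\star},\mathrm{ad},A)$.
   Context: Finite-dimensional spaces, characteristic zero. $\mathcal{L}_\star(x)y=x\star y$, $\mathrm{ad}(x)y=[x,y]$. Zinbiel: $x\star(y\star z)=(x\star y)\star z+(y\star x)\star z$. Transposed Poisson algebra: $(A,\cdot)$ commutative associative, $(A,[-,-])$ Lie, $2z\cdot[x,y]=[z\cdot x,y]+[x,z\cdot y]$. A representation of a transposed Poisson algebra is $(\mu,\rho,V)$ with $\mu(x\cdot y)=\mu(x)\mu(y)$, $\rho([x,y])=[\rho(x),\rho(y)]$, $2\mu(x)\rho(y)=\rho(x\cdot y)+\rho(y)\mu(x)$, $2\mu([x,y])=\rho(x)\mu(y)-\rho(y)\mu(x)$. A TZLO algebra is $(A,\star,[-,-])$ with $(A,\star)$ Zinbiel, $(A,[-,-])$ Lie, and $x\star[y,z]=[x,y]\star z=[x,y\star z]=0$ for all $x,y,z$. *)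

(* Defs.v *)
From HB Require Import structures.
From mathcomp Require Import all_boot all_order all_algebra.
Set Implicit Arguments. Unset Strict Implicit. Unset Printing Implicit Defensive.
Import GRing.Theory.
Local Open Scope ring_scope.

Section Defs.
Variable K : fieldType.

Definition bilinear_op (A : lmodType K) (op : A -> A -> A) : Prop :=
  (forall x, linear (op x)) /\ (forall y, linear (fun x => op x y)).

Definition zinbiel (A : lmodType K) (star : A -> A -> A) : Prop :=
  forall x y z, star x (star y z) = star (star x y) z + star (star y x) z.

Definition lie (A : lmodType K) (br : A -> A -> A) : Prop :=
  (forall x, br x x = 0) /\
  (forall x y z, br x (br y z) + br y (br z x) + br z (br x y) = 0).

Definition com_assoc (A : lmodType K) (dot : A -> A -> A) : Prop :=
  (forall x y, dot x y = dot y x) /\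
  (forall x y z, dot (dot x y) z = dot x (dot y z)).

Definition transposed_poisson (A : lmodType K) (dot br : A -> A -> A) : Prop :=
  com_assoc dot /\ lie br /\
  forall x y z, (dot z (br x y)) *+ 2 = br (dot z x) y + br x (dot z y).

(* representation (mu, rho, V) of the transposed Poisson algebra (A, dot, br):
   mu, rho : A -> End(V) linear maps, identities stated pointwise on V *)
Definition tp_representation (A V : lmodType K) (dot br : A -> A -> A)
  (mu rho : A -> V -> V) : Prop :=
  [/\ (forall x, linear (mu x)), (forall x, linear (rho x)),
      (forall v, linear (fun x => mu x v)), (forall v, linear (fun x => rho x v)) &
  [/\ (forall x y v, mu (dot x y) v = mu x (mu y v)),
      (forall x y v, rho (br x y) v = rho x (rho y v) - rho y (rho x v)),
      (forall x y v, (mu x (rho y v)) *+ 2 = rho (dot x y) v + rho y (mu x v)) &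
      (forall x y v, (mu (br x y) v) *+ 2 = rho x (mu y v) - rho y (mu x v))]].

Definition tzlo (A : lmodType K) (star br : A -> A -> A) : Prop :=
  [/\ zinbiel star, lie br &
      forall x y z, [/\ star x (br y z) = 0, star (br x y) z = 0 & br x (star y z) = 0]].

End Defs.

(* Main.v *)
Require Import Defs.
From HB Require Import structures.
From mathcomp Require Import all_boot all_order all_algebra.
Import GRing.Theory.
Local Open Scope ring_scope.

Set Implicit Arguments.
Section Helpers.
Variable K : fieldType.
Variable A : lmodType K.

Lemma linD' {f : A -> A} : linear f -> forall u v, f (u + v) = f u + f v.
Proof. by move=> Hf u v; have := Hf 1 u v; rewrite !scale1r. Qed.

Lemma lin0' {f : A -> A} : linear f -> f 0 = 0.
Proof.
move=> Hf; have h := linD' Hf 0 0; rewrite addr0 in h.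
by apply: (addrI (f 0)); rewrite addr0 -h.
Qed.

Lemma linN' {f : A -> A} : linear f -> forall u, f (- u) = - f u.
Proof.
move=> Hf u; apply/eqP; rewrite -subr_eq0 opprK -linD' // addNr lin0' //.
Qed.

Lemma antisym' {br : A -> A -> A} : bilinear_op br -> (forall x, br x x = 0) ->
  forall x y, br x y = - br y x.
Proof.
move=> [H1 H2] H0 x y; have := H0 (x + y).
rewrite (linD' (H2 _)) !(linD' (H1 _)) !H0 add0r addr0 => /eqP.
by rewrite addr_eq0 => /eqP.
Qed.

Lemma twice0 (charK : [pchar K] =i pred0) (a : A) : a *+ 2 = 0 -> a = 0.
Proof.
move=> H; have h2 : (2%:R : K) != 0.
  apply/negP => /eqP h; have := charK 2; rewrite inE /= h eqxx /= => /negbT.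
  by [].
by rewrite -(scale1r a) -(mulVf h2) -scalerA scaler_nat H scaler0.
Qed.
End Helpers.

Theorem mainTheorem10 (K : fieldType) (A : vectType K)
  (charK : [pchar K] =i pred0)
  (star br : A -> A -> A)
  (Hstar : bilinear_op star) (Hbr : bilinear_op br) :
  let dot := fun x y => star x y + star y x in
  (transposed_poisson dot br -> zinbiel star ->
     tp_representation dot br star br -> tzlo star br) /\
  (tzlo star br ->
     transposed_poisson dot br /\ tp_representation dot br star br).
Proof.
move=> dot; have [S1 S2] := Hstar; have [B1 B2] := Hbr.
have SD1 x := linD' (S1 x); have SD2 y := linD' (S2 y).
have BD1 x := linD' (B1 x); have BD2 y := linD' (B2 y).
split.
- move=> [Hca [[Hl0 Hjac] Htp]] Hz [_ _ _ _ [_ _ R2 R3]].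
  have anti := antisym' Hbr Hl0.
  have Hc x y z : star (br x y) z *+ 2 = br x (star y z).
    have h1 := Htp x y z; have h2 := R2 z x y.
    rewrite /dot mulrnDl in h1. move: h1 h2. simpl. move=> h1 h2. rewrite h2 BD1 addrA in h1.
    idtac.
    rewrite mulr2n; apply: (addrI (br (dot z x) y + br x (star z y))); rewrite addrA h1 /dot addrA. by [].
  have Hb x y z : br x (star y z) = 0.
    have := R3 y x z; rewrite Hc.
    move/(congr1 (fun t => br y (star x z) - t)); rewrite subrr opprB addrC subrK.
    by move=> h; rewrite -h.
  have Hs x y z : star (br x y) z = 0.
    by apply: (twice0 _ charK); rewrite Hc Hb.
  split => // x y z; split => //.
  apply: (twice0 _ charK); rewrite R2 /dot Hb BD2 addr0 anti (anti (star y x)).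
  by rewrite !Hb oppr0 addr0.
- move=> [Hz [Hl0 Hjac] Ht].
  have anti := antisym' Hbr Hl0.
  have Hb x y z : br x (star y z) = 0 by have [] := Ht x y z.
  have Hs x y z : star (br x y) z = 0 by have [] := Ht x y z.
  have Hs' x y z : star x (br y z) = 0 by have [] := Ht x y z.
  have Hb' x y z : br (star y z) x = 0 by rewrite anti Hb oppr0.
  have Hdot x y v : star (dot x y) v = star x (star y v) by rewrite (Hz x y v) /dot SD2.
  have Hlin0 x y v : br (dot x y) v = 0.
    by rewrite /dot BD2 !Hb' addr0.
  split.
  + split; last split.
    * split => [x y|x y z]; first by rewrite /dot addrC.
      have Hsw a b c : star a (star b c) = star b (star a c).
        by rewrite -!Hdot /dot addrC.
      rewrite [dot (dot x y) z]/dot [dot x (dot y z)]/dot !Hdot /dot !SD1.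
      by rewrite (Hsw z x y) (Hsw z y x) addrA.
    * by split.
    * move=> x y z; rewrite Hlin0 /dot Hs Hs' addr0 mul0rn.
      by rewrite BD1 !Hb addr0 add0r.
  + split => //; split.
    * move=> x y v; by rewrite -Hdot.
    * move=> x y v; have := Hjac x y v.
      rewrite (anti v (br x y)) (anti v x) (linN' (B1 y)) => h.
      by apply/eqP; rewrite eq_sym -subr_eq0 -h.
    * move=> x y v; by rewrite Hs' mul0rn Hlin0 Hb addr0.
    * move=> x y v; by rewrite Hs mul0rn !Hb subrr.
Qed.
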